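(* Let $A\in\mathbb{C}^{n\times m}$, $\alpha_1\ge 1/\sqrt{n}$, $\alpha_2\ge 1/\sqrt{m}$, and let $$U=\Big\{u\in\mathbb{C}^n:\|u\|\le\alpha_1,\ \operatorname{Re}(u)\ge0,\ \textstyle\sum_{i=1}^n u_i=1\Big\},\qquad V=\Big\{v\in\mathbb{C}^m:\|v\|\le\alpha_2,\ \operatorname{Re}(v)\ge0,\ \textstyle\sum_{i=1}^m v_i=1\Big\}.$$ Then there exists $(u^\star,v^\star,\varrho)\in U\times V\times\mathbb{R}$ such that $$\operatorname{Re}(u^{\star H}Av)\ge\varrho\ \ \forall v\in V\qquad\text{and}\qquad \operatorname{Re}(u^HAv^\star)\le\varrho\ \ \forall u\in U.$$ The real number $\varrho$ is uniquely determined and $$\varrho=\max_{u\in U}\min_{v\in V}\operatorname{Re}(u^HAv)=\min_{v\in V}\max_{u\in U}\operatorname{Re}(u^HAv).$$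
   Context: $\|\cdot\|$ is the Euclidean norm on $\mathbb{C}^k$, $u^H$ denotes the conjugate transpose, $\operatorname{Re}(u)\ge0$ is meant componentwise, and $\sum_i u_i=1$ is an equality of complex numbers (so the real parts sum to $1$ and the imaginary parts sum to $0$). *)

(* Defs.v *)
From HB Require Import structures.
From mathcomp Require Import all_boot all_order all_algebra.
From mathcomp Require Import all_classical all_reals.
From mathcomp Require Import complex.
Set Implicit Arguments. Unset Strict Implicit. Unset Printing Implicit Defensive.
Import Order.TTheory GRing.Theory Num.Theory.
Local Open Scope ring_scope.

Definition cvnorm (R : realType) (k : nat) (u : 'cV[R[i]]_k) : R :=
  Num.sqrt (\sum_(i < k) ((complex.Re (u i ord0)) ^+ 2 + (complex.Im (u i ord0)) ^+ 2)).

Definition ctr (R : realType) (k : nat) (u : 'cV[R[i]]_k) : 'rV[R[i]]_k :=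
  map_mx (@conjc R) u^T.

Definition feas (R : realType) (k : nat) (a : R) : set 'cV[R[i]]_k :=
  [set u | cvnorm u <= a /\ (forall i, 0 <= complex.Re (u i ord0))
           /\ \sum_(i < k) u i ord0 = 1].

Definition payoff (R : realType) (n m : nat) (A : 'M[R[i]]_(n, m))
  (u : 'cV[R[i]]_n) (v : 'cV[R[i]]_m) : R :=
  complex.Re ((ctr u *m A *m v) ord0 ord0).

Definition is_min_on (T : Type) (R : realType) (S : set T) (g : T -> R) (r : R) :=
  (exists2 x, S x & g x = r) /\ (forall x, S x -> r <= g x).

Definition is_max_on (T : Type) (R : realType) (S : set T) (g : T -> R) (r : R) :=
  (exists2 x, S x & g x = r) /\ (forall x, S x -> g x <= r).

Definition is_maxmin (X Y : Type) (R : realType) (S : set X) (S' : set Y)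
  (f : X -> Y -> R) (r : R) :=
  (forall x, S x -> exists mn, is_min_on S' (f x) mn) /\
  (exists2 x, S x & is_min_on S' (f x) r) /\
  (forall x mn, S x -> is_min_on S' (f x) mn -> mn <= r).

Definition is_minmax (X Y : Type) (R : realType) (S : set X) (S' : set Y)
  (f : X -> Y -> R) (r : R) :=
  (forall y, S' y -> exists mx, is_max_on S (fun x => f x y) mx) /\
  (exists2 y, S' y & is_max_on S (fun x => f x y) r) /\
  (forall y mx, S' y -> is_max_on S (fun x => f x y) mx -> r <= mx).

Definition saddle (R : realType) (n m : nat) (A : 'M[R[i]]_(n, m))
  (a1 a2 : R) (u : 'cV[R[i]]_n) (v : 'cV[R[i]]_m) (r : R) :=
  feas a1 u /\ feas a2 v /\
  (forall v', feas a2 v' -> r <= payoff A u v') /\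
  (forall u', feas a1 u' -> payoff A u' v <= r).

(* Main.v *)
Require Import Defs.
From HB Require Import structures.
From mathcomp Require Import all_boot all_order all_algebra.
From mathcomp Require Import all_classical all_reals all_analysis.
From mathcomp Require Import complex.
From mathcomp Require Import ring lra.
Import Order.TTheory GRing.Theory Num.Theory.
Import numFieldNormedType.Exports.
Set Implicit Arguments. Unset Strict Implicit. Unset Printing Implicit Defensive.
Local Open Scope ring_scope.
Local Open Scope classical_set_scope.

Section Gen.
Variable R : realType.

Lemma cont_sum (T : topologicalType) n (G : 'I_n -> T -> R) :
  (forall i, continuous (G i)) -> continuous (fun x => \sum_(i < n) G i x).
Proof.
elim: n G => [|n IH] G HG.
  under eq_fun do rewrite big_ord0.
  exact: cst_continuous.
under eq_fun do rewrite big_ord_recr /=.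
move=> x; apply: (@continuousD _ _ _ (fun x => \sum_(i < n) G (widen_ord (leqnSn n) i) x) (G ord_max)).
  by apply: IH => i; apply: HG.
exact: HG.
Qed.

Definition linR p (phi : 'rV[R]_p -> R) :=
  forall a x x', phi (a *: x + x') = a * phi x + phi x'.

Lemma linR0 p phi : @linR p phi -> phi 0 = 0.
Proof.
move=> h; have := h 1 0 0; rewrite scale1r addr0 mul1r => E; lra.
Qed.

Lemma linRZ p phi : @linR p phi -> forall a x, phi (a *: x) = a * phi x.
Proof.
move=> h a x; have := h a x 0; rewrite addr0 (linR0 h) addr0; done.
Qed.

Lemma linRD p phi : @linR p phi -> forall x y, phi (x + y) = phi x + phi y.
Proof. by move=> h x y; have := h 1 x y; rewrite scale1r mul1r. Qed.

Lemma linR_sum p phi : @linR p phi -> forall T (x : 'I_T -> 'rV[R]_p),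
  phi (\sum_(t < T) x t) = \sum_(t < T) phi (x t).
Proof.
move=> h T x; apply: (big_morph phi (linRD h) (linR0 h)).
Qed.

Lemma linR_dec p phi : @linR p phi -> forall x,
  phi x = \sum_(j < p) x 0 j * phi (delta_mx 0 j).
Proof.
move=> h x; rewrite {1}(row_sum_delta x) linR_sum //.
by apply: eq_bigr => j _; rewrite linRZ.
Qed.

Lemma linR_cont p phi : @linR p phi -> continuous phi.
Proof.
move=> h.
have -> : phi = (fun x => \sum_(j < p) x 0 j * phi (delta_mx 0 j)).
  by apply: funext => x; apply: linR_dec.
apply: cont_sum => j x.
apply: (@continuousM _ _ (fun x : 'rV[R]_p => x 0 j) (fun=> phi (delta_mx 0 j))).
  exact: coord_continuous.
exact: cst_continuous.
Qed.

Lemma EVT_maxS (T : topologicalType) (A : set T) (phi : T -> R) :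
  A !=set0 -> compact A -> continuous phi ->
  exists2 c, A c & forall t, A t -> phi t <= phi c.
Proof.
move=> A0 cA cphi.
have [c cA' H] := compact_EVT_max A0 cA (continuous_subspaceT cphi).
by exists c; [rewrite inE in cA'|move=> t At; apply: H; rewrite inE].
Qed.

Lemma EVT_minS (T : topologicalType) (A : set T) (phi : T -> R) :
  A !=set0 -> compact A -> continuous phi ->
  exists2 c, A c & forall t, A t -> phi c <= phi t.
Proof.
move=> A0 cA cphi.
have [c cA' H] := compact_EVT_min A0 cA (continuous_subspaceT cphi).
by exists c; [rewrite inE in cA'|move=> t At; apply: H; rewrite inE].
Qed.

End Gen.

Section Dot.
Variable R : realType.

Definition dotp q (a b : 'rV[R]_q) : R := \sum_j a 0 j * b 0 j.

Definition convexS p (X : set 'rV[R]_p) :=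
  forall x y t, X x -> X y -> 0 <= t -> t <= 1 -> X ((1 - t) *: x + t *: y).

Lemma sq_ge0 q (a : 'rV[R]_q) : 0 <= dotp a a.
Proof. by apply: sumr_ge0 => j _; rewrite -expr2 sqr_ge0. Qed.

Lemma dotpBr q (a b c : 'rV[R]_q) : dotp a (b - c) = dotp a b - dotp a c.
Proof.
by rewrite /dotp -sumrB; apply: eq_bigr => j _; rewrite !mxE mulrBr.
Qed.

Lemma sq_step q (z w y : 'rV[R]_q) t :
  dotp (z - ((1 - t) *: w + t *: y)) (z - ((1 - t) *: w + t *: y)) =
  dotp (z - w) (z - w) - 2 * t * dotp (z - w) (y - w) + t ^+ 2 * dotp (y - w) (y - w).
Proof.
rewrite /dotp !mulr_sumr -sumrB -big_split /=; apply: eq_bigr => j _.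
rewrite !mxE; ring.
Qed.

Lemma sq_tri q (z w y : 'rV[R]_q) :
  dotp (z - y) (z - y) =
  dotp (z - w) (z - w) + dotp (w - y) (w - y) - 2 * dotp (z - w) (y - w).
Proof.
rewrite /dotp !mulr_sumr -big_split -sumrB /=; apply: eq_bigr => j _.
rewrite !mxE; ring.
Qed.

Lemma sq_grad q (a g y : 'rV[R]_q) (eta : R) :
  dotp (a - eta *: g - y) (a - eta *: g - y) =
  dotp (a - y) (a - y) - 2 * eta * dotp g (a - y) + eta ^+ 2 * dotp g g.
Proof.
rewrite /dotp !mulr_sumr -sumrB -big_split /=; apply: eq_bigr => j _.
rewrite !mxE; ring.
Qed.

Lemma small_le0 (d s : R) : 0 <= s ->
  (forall t, 0 < t -> t <= 1 -> 2 * d <= t * s) -> d <= 0.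
Proof.
move=> s0 H; case: (lerP d 0) => // d0.
have ds0 : 0 < d + s by lra.
pose t := d / (d + s).
have t0 : 0 < t by rewrite /t divr_gt0.
have t1 : t <= 1 by rewrite /t ler_pdivrMr // mul1r; lra.
have te : t * d + t * s = d.
  by rewrite /t; field; rewrite gt_eqF.
have := H t t0 t1; nra.
Qed.

Lemma dotp_cont q (z : 'rV[R]_q) : continuous (fun w : 'rV[R]_q => dotp (z - w) (z - w)).
Proof.
rewrite /dotp; apply: cont_sum => j.
have cj : continuous (fun w : 'rV[R]_q => (z - w) 0 j).
  move=> w; under eq_fun do rewrite !mxE.
  apply: (@continuousB _ _ _ (fun=> z 0 j) (fun w : 'rV[R]_q => w 0 j)).
    exact: cst_continuous.
  exact: coord_continuous.
by move=> w; apply: (@continuousM _ _ (fun w : 'rV[R]_q => (z - w) 0 j)); apply: cj.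
Qed.

Lemma proj_ex q (Y : set 'rV[R]_q) : Y !=set0 -> compact Y -> convexS Y ->
  forall z, exists2 w, Y w & forall y, Y y -> dotp (w - y) (w - y) <= dotp (z - y) (z - y).
Proof.
move=> Y0 cY vY z.
have [w Yw Hw] := EVT_minS Y0 cY (@dotp_cont q z).
exists w => // y Yy.
have d0 : dotp (z - w) (y - w) <= 0.
  apply: (small_le0 (sq_ge0 (y - w))) => t t0 t1.
  have := Hw _ (vY _ _ t Yw Yy (ltW t0) t1).
  rewrite sq_step => h.
  have : 2 * t * dotp (z - w) (y - w) <= t ^+ 2 * dotp (y - w) (y - w) by lra.
  move=> h2; rewrite -(ler_pM2l t0); rewrite expr2 in h2; lra.
rewrite (sq_tri z w y); have := sq_ge0 (z - w); lra.
Qed.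

Lemma convex_avg p (X : set 'rV[R]_p) : convexS X ->
  forall (x : nat -> 'rV[R]_p), (forall t, X (x t)) ->
  forall T, X ((T.+1)%:R^-1 *: \sum_(t < T.+1) x t).
Proof.
move=> vX x Xx; elim=> [|T IH].
  by rewrite big_ord1 invr1 scale1r.
rewrite big_ord_recr /=.
pose s : R := (T.+2)%:R^-1.
have s0 : 0 <= s by rewrite /s invr_ge0.
have s1 : s <= 1 by rewrite /s invf_le1 // ler1n.
have -> : (T.+2)%:R^-1 *: (\sum_(i < T.+1) x i + x T.+1) =
   (1 - s) *: ((T.+1)%:R^-1 *: \sum_(t < T.+1) x t) + s *: x T.+1.
  rewrite scalerDr scalerA; congr (_ *: _ + _).
  have a0 : 0 < (T.+1)%:R :> R by rewrite ltr0n.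
  have b0 : 0 <= T%:R :> R by rewrite ler0n.
  rewrite /s -natr1; field.
  by apply/andP; split; rewrite gt_eqF //; lra.
exact: (vX _ _ s IH (Xx _) s0 s1).
Qed.

End Dot.

Section Minimax.
Variable R : realType.
Variables p q : nat.
Variables (X : set 'rV[R]_p) (Y : set 'rV[R]_q) (f : 'rV[R]_p -> 'rV[R]_q -> R).
Hypotheses (X0 : X !=set0) (Y0 : Y !=set0) (cX : compact X) (cY : compact Y)
  (vX : convexS X) (vY : convexS Y)
  (fl : forall y, linR (fun x => f x y)) (fr : forall x, linR (f x)).

Let g x : 'rV[R]_q := \row_j f x (delta_mx 0 j).

Let f_dot x y : f x y = dotp (g x) y.
Proof. by rewrite (linR_dec (fr x) y) /dotp; apply: eq_bigr => j _; rewrite mxE mulrC. Qed.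

Let flZ a x y : f (a *: x) y = a * f x y.
Proof. exact: (linRZ (fl y)). Qed.
Let frZ a x y : f x (a *: y) = a * f x y.
Proof. exact: (linRZ (fr x)). Qed.
Let flS T (xx : 'I_T -> 'rV[R]_p) y : f (\sum_(t < T) xx t) y = \sum_(t < T) f (xx t) y.
Proof. exact: (linR_sum (fl y)). Qed.
Let frS T (yy : 'I_T -> 'rV[R]_q) x : f x (\sum_(t < T) yy t) = \sum_(t < T) f x (yy t).
Proof. exact: (linR_sum (fr x)). Qed.

Lemma approx_saddle eps : 0 < eps -> exists2 xb, X xb & exists2 yb, Y yb &
  forall x y, X x -> Y y -> f x yb <= f xb y + eps.
Proof.
move=> e0.
have [y0 Yy0] := Y0.
have [yD YyD HD] := EVT_maxS Y0 cY (@dotp_cont _ q y0).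
set D := dotp (y0 - yD) (y0 - yD) in HD.
have D0 : 0 <= D := sq_ge0 _.
have gc : continuous (fun x => dotp (g x) (g x)).
  rewrite /dotp; apply: cont_sum => j x.
  under eq_fun do rewrite mxE.
  by apply: (@continuousM _ _ (fun x => f x (delta_mx 0 j)) (fun x => f x (delta_mx 0 j))); apply: (linR_cont (fl _)).
have [xG XxG HG] := EVT_maxS X0 cX gc.
set G := dotp (g xG) (g xG) in HG.
have G0 : 0 <= G := sq_ge0 _.
have [BR HBR] : {BR : 'rV[R]_q -> 'rV[R]_p &
    forall y, X (BR y) /\ forall x, X x -> f x y <= f (BR y) y}.
  apply: (@choice _ _ (fun y x => X x /\ forall x', X x' -> f x' y <= f x y)) => y.
  have [c Xc Hc] := EVT_maxS X0 cX (linR_cont (fl y)).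
  by exists c.
have [P HP] : {P : 'rV[R]_q -> 'rV[R]_q & forall z, Y (P z) /\
    forall y, Y y -> dotp (P z - y) (P z - y) <= dotp (z - y) (z - y)}.
  apply: (@choice _ _ (fun z w => Y w /\ forall y, Y y ->
     dotp (w - y) (w - y) <= dotp (z - y) (z - y))) => z.
  have [w Yw Hw] := proj_ex Y0 cY vY z.
  by exists w.
pose eta := eps / (G + 1).
have eta0 : 0 < eta by rewrite divr_gt0 //; lra.
have etaG : eta * G <= eps.
  rewrite /eta mulrAC ler_pdivrMr; last lra.
  nra.
pose ys := fun t => iter t (fun y => P (y - eta *: g (BR y))) y0.
pose xs := fun t => BR (ys t).
have Yys t : Y (ys t).
  by case: t => [|t] //=; case: (HP (ys t - eta *: g (BR (ys t)))).
have Xxs t : X (xs t) by case: (HBR (ys t)).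
have key : forall y, Y y -> forall T,
    2 * eta * \sum_(t < T) (f (xs t) (ys t) - f (xs t) y) + dotp (ys T - y) (ys T - y)
    <= dotp (y0 - y) (y0 - y) + T%:R * (eta ^+ 2 * G).
  move=> y Yy; elim=> [|T IH].
    by rewrite big_ord0 mulr0 add0r mul0r addr0.
  rewrite big_ord_recr /=.
  have e1 : ys T.+1 = P (ys T - eta *: g (xs T)) by [].
  have h1 := (HP (ys T - eta *: g (xs T))).2 y Yy.
  rewrite -e1 sq_grad in h1.
  have h2 : dotp (g (xs T)) (ys T - y) = f (xs T) (ys T) - f (xs T) y.
    by rewrite dotpBr -!f_dot.
  have h3 : dotp (g (xs T)) (g (xs T)) <= G := HG _ (Xxs T).
  have h4 : eta ^+ 2 * dotp (g (xs T)) (g (xs T)) <= eta ^+ 2 * G.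
    by rewrite ler_wpM2l // exprn_ge0 // ltW.
  rewrite h2 in h1.
  rewrite -natr1 mulrDl mul1r mulrDr.
  lra.
pose N := Num.Def.archi_bound (D / (eta * eps)).
pose T := N.+1.
have T0 : 0 < T%:R :> R by rewrite ltr0n.
have TN : D <= eta * eps * T%:R.
  have h := archi_boundP (divr_ge0 D0 (ltW (mulr_gt0 eta0 e0))).
  have ee0 : 0 < eta * eps := mulr_gt0 eta0 e0.
  rewrite -/N (ltr_pdivrMr _ _ ee0) in h.
  have : N%:R <= T%:R :> R by rewrite ler_nat.
  have : 0 <= eta * eps by rewrite mulr_ge0 // ltW.
  nra.
exists ((T%:R : R)^-1 *: \sum_(t < T) xs t); first exact: (convex_avg vX Xxs N).
exists ((T%:R : R)^-1 *: \sum_(t < T) ys t); first exact: (convex_avg vY Yys N).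
move=> x y Xx Yy.
rewrite flZ frZ flS frS.
have hBR : \sum_(t < T) f x (ys t) <= \sum_(t < T) f (xs t) (ys t).
  by apply: ler_sum => t _; apply: (HBR (ys t)).2.
have K := key y Yy T.
have Dy := HD y Yy.
have sq0 := sq_ge0 (ys T - y).
rewrite sumrB in K.
set Sf := \sum_(t < T) f (xs t) (ys t) in hBR K.
set Sy := \sum_(t < T) f (xs t) y in K *.
set Sx := \sum_(t < T) f x (ys t) in hBR *.
have h5 : T%:R * (eta ^+ 2 * G) <= T%:R * (eta * eps).
  apply: ler_wpM2l; first exact: ltW.
  by rewrite expr2 -mulrA; apply: ler_wpM2l => //; exact: ltW.
have h6 : 2 * eta * (Sf - Sy) <= 2 * eta * (eps * T%:R) by nra.
have h7 : Sf - Sy <= eps * T%:R.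
  by rewrite -(@ler_pM2l _ (2 * eta)) // mulr_gt0.
have : T%:R^-1 * Sx <= T%:R^-1 * (Sy + eps * T%:R).
  by apply: ler_wpM2l; [rewrite invr_ge0 ltW | lra].
have -> : T%:R^-1 * (Sy + eps * T%:R) = T%:R^-1 * Sy + eps.
  by field; rewrite gt_eqF.
done.
Qed.

Lemma inv_small (e : R) : 0 < e -> exists K : nat, (K.+1%:R : R)^-1 <= e.
Proof.
move=> e0; exists (Num.Def.archi_bound e^-1).
have ie : 0 < e^-1 by rewrite invr_gt0.
have h := archi_boundP (ltW ie).
set K := Num.Def.archi_bound e^-1 in h *.
have hK : (K%:R : R) <= K.+1%:R by rewrite ler_nat.
have K0 : (0 : R) < K.+1%:R by rewrite ltr0n.
rewrite -[leLHS]mul1r ler_pdivrMr //.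
rewrite -[e^-1]mul1r ltr_pdivrMr // in h.
lra.
Qed.

Lemma saddle_exists : exists2 xs, X xs & exists2 ys, Y ys &
  forall x y, X x -> Y y -> f x ys <= f xs y.
Proof.
have [zs Hz] : {zs : nat -> 'rV[R]_p * 'rV[R]_q & forall k, X (zs k).1 /\ Y (zs k).2 /\
   forall x y, X x -> Y y -> f x (zs k).2 <= f (zs k).1 y + (k.+1%:R)^-1}.
  apply: (@choice _ _ (fun k z => X z.1 /\ Y z.2 /\ forall x y, X x -> Y y ->
     f x z.2 <= f z.1 y + (k.+1%:R)^-1)) => k.
  have k0 : (0 : R) < k.+1%:R^-1 by rewrite invr_gt0 ltr0n.
  have [xb Xxb [yb Yyb H]] := @approx_saddle (k.+1%:R^-1) k0.
  by exists (xb, yb).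
have cXY := compact_setX cX cY.
have FXY : (zs @ \oo) (X `*` Y).
  apply: (@filterE nat \oo _ (zs @^-1` (X `*` Y))) => k /=.
  by case: (Hz k) => [? []].
have [[xs ys] [[/= Xxs Yys] clz]] := cXY (zs @ \oo) _ FXY.
exists xs => //; exists ys => // x y Xx Yy.
apply/ler_addgt0Pr => e e0.
pose phi := fun z : 'rV[R]_p * 'rV[R]_q => f x z.2 - f z.1 y.
have phic : continuous phi.
  move=> z; apply: continuousB.
    apply: (@continuous_comp _ _ _ snd (f x)); first exact: cvg_snd.
    exact: (linR_cont (fr x)).
  apply: (@continuous_comp _ _ _ fst (fun x => f x y)); first exact: cvg_fst.
  exact: (linR_cont (fl y)).
pose C := phi @^-1` [set r | r <= e].
have Cc : closed C.
  by apply: preimage_closed; [move=> z _; apply: phic | exact: closed_le].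
have FC : (zs @ \oo) C.
  have [K HK] := inv_small e0.
  exists K => // k /= Kk.
  rewrite /C /phi /=.
  have := (Hz k).2.2 x y Xx Yy.
  have : (k.+1%:R : R)^-1 <= K.+1%:R^-1.
    by rewrite lef_pV2 ?posrE ?ltr0n // ler_nat.
  move=> h1 h2; rewrite lerBlDr addrC; apply: (le_trans h2).
  by rewrite lerD2l; exact: le_trans h1 HK.
have : closure C (xs, ys) by rewrite clusterE in clz; apply: clz.
rewrite -(closure_id C).1 // /C /phi /=.
lra.
Qed.

End Minimax.

Section Transfer.
Variable R : realType.

Definition dec k (w : 'rV[R]_(k + k)) : 'cV[R[i]]_k :=
  \col_i (Complex (w 0 (lshift k i)) (w 0 (rshift k i))).
Definition enc k (u : 'cV[R[i]]_k) : 'rV[R]_(k + k) :=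
  row_mx (\row_i complex.Re (u i 0)) (\row_i complex.Im (u i 0)).

Lemma decK k (u : 'cV[R[i]]_k) : dec (enc u) = u.
Proof.
apply/matrixP => i j; rewrite [LHS]mxE /enc row_mxEl row_mxEr !mxE (ord1 j).
by case: (u i 0).
Qed.

Lemma Re_sum k (F : 'I_k -> R[i]) : complex.Re (\sum_i F i) = \sum_i complex.Re (F i).
Proof. by apply: (big_morph (@complex.Re R)) => [[a b] [c d]|]. Qed.
Lemma Im_sum k (F : 'I_k -> R[i]) : complex.Im (\sum_i F i) = \sum_i complex.Im (F i).
Proof. by apply: (big_morph (@complex.Im R)) => [[a b] [c d]|]. Qed.

Lemma feas_dec k (a : R) (w : 'rV[R]_(k + k)) : 0 <= a ->
  feas a (dec w) <->
  [/\ \sum_(i < k) (w 0 (lshift k i) ^+ 2 + w 0 (rshift k i) ^+ 2) <= a ^+ 2,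
      (forall i, 0 <= w 0 (lshift k i)),
      \sum_(i < k) w 0 (lshift k i) = 1 &
      \sum_(i < k) w 0 (rshift k i) = 0].
Proof.
move=> a0; rewrite /feas /cvnorm /=.
have -> : \sum_(i < k) ((complex.Re (dec w i 0)) ^+ 2 + (complex.Im (dec w i 0)) ^+ 2)
   = \sum_(i < k) (w 0 (lshift k i) ^+ 2 + w 0 (rshift k i) ^+ 2).
  by apply: eq_bigr => i _; rewrite !mxE.
have s0 : 0 <= \sum_(i < k) (w 0 (lshift k i) ^+ 2 + w 0 (rshift k i) ^+ 2).
  by apply: sumr_ge0 => i _; rewrite addr_ge0 // sqr_ge0.
have -> : (Num.sqrt (\sum_(i < k) (w 0 (lshift k i) ^+ 2 + w 0 (rshift k i) ^+ 2)) <= a) =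
   (\sum_(i < k) (w 0 (lshift k i) ^+ 2 + w 0 (rshift k i) ^+ 2) <= a ^+ 2).
  by rewrite -{1}(ger0_norm a0) -sqrtr_sqr ler_sqrt // sqr_ge0.
have -> : \sum_(i < k) dec w i 0 =
    Complex (\sum_(i < k) w 0 (lshift k i)) (\sum_(i < k) w 0 (rshift k i)).
  apply/eqP; rewrite eq_complex Re_sum Im_sum; apply/andP; split; apply/eqP;
  by apply: eq_bigr => i _; rewrite !mxE.
split.
  case=> h1 [h2 h3]; split => //; first by move=> i; have := h2 i; rewrite mxE.
  1,2: by case: h3.
case=> h1 h2 h3 h4; split => //; split; first by move=> i; rewrite mxE /=; apply: h2.
by rewrite h3 h4.
Qed.

Lemma re_id (a b c d e f : R) :
  (a * c - - b * d) * e - (a * d + - b * c) * f = a * (c * e - d * f) + b * (d * e + c * f).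
Proof. ring. Qed.

Definition payRe n m (A : 'M[R[i]]_(n, m)) (x : 'rV[R]_(n + n)) (y : 'rV[R]_(m + m)) :=
  \sum_(j < m) \sum_(i < n)
    (x 0 (lshift n i) * (complex.Re (A i j) * y 0 (lshift m j) - complex.Im (A i j) * y 0 (rshift m j))
   + x 0 (rshift n i) * (complex.Im (A i j) * y 0 (lshift m j) + complex.Re (A i j) * y 0 (rshift m j))).

Lemma payoff_dec n m (A : 'M[R[i]]_(n, m)) x y :
  payoff A (dec x) (dec y) = payRe A x y.
Proof.
rewrite /payoff /ctr !mxE Re_sum; apply: eq_bigr => j _.
rewrite !mxE mulr_suml Re_sum; apply: eq_bigr => i _.
rewrite !mxE; case: (A i j) => c d /=.
move: (x 0 (lshift n i)) (x 0 (rshift n i)) (y 0 (lshift m j)) (y 0 (rshift m j)) => a b e f.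
exact: re_id.
Qed.

Lemma payRe_l n m (A : 'M[R[i]]_(n, m)) y : linR (fun x => payRe A x y).
Proof.
move=> a x x'; rewrite /payRe mulr_sumr -big_split; apply: eq_bigr => j _.
rewrite mulr_sumr -big_split; apply: eq_bigr => i _.
rewrite !mxE /=; ring.
Qed.

Lemma payRe_r n m (A : 'M[R[i]]_(n, m)) x : linR (payRe A x).
Proof.
move=> a y y'; rewrite /payRe mulr_sumr -big_split; apply: eq_bigr => j _.
rewrite mulr_sumr -big_split; apply: eq_bigr => i _.
rewrite !mxE /=; ring.
Qed.

End Transfer.

Section Feas.
Variable R : realType.

Lemma cont_mul (T : topologicalType) (f g : T -> R) :
  continuous f -> continuous g -> continuous (fun x => f x * g x).
Proof. by move=> hf hg x; apply: (@continuousM _ _ f g); [apply: hf|apply: hg]. Qed.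
Lemma cont_add (T : topologicalType) (f g : T -> R) :
  continuous f -> continuous g -> continuous (fun x => f x + g x).
Proof. by move=> hf hg x; apply: (@continuousD _ _ _ f g); [apply: hf|apply: hg]. Qed.

Variable k : nat.

Definition XR (a : R) := [set w : 'rV[R]_(k + k) |
  [/\ \sum_(i < k) (w 0 (lshift k i) ^+ 2 + w 0 (rshift k i) ^+ 2) <= a ^+ 2,
      (forall i, 0 <= w 0 (lshift k i)),
      \sum_(i < k) w 0 (lshift k i) = 1 &
      \sum_(i < k) w 0 (rshift k i) = 0]].

Lemma XR_closed a : closed (XR a).
Proof.
have c1 : continuous (fun w : 'rV[R]_(k + k) =>
    \sum_(i < k) (w 0 (lshift k i) ^+ 2 + w 0 (rshift k i) ^+ 2)).
  apply: cont_sum => i; under eq_fun do rewrite !expr2.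
  by apply: cont_add; apply: cont_mul; apply: coord_continuous.
have c2 : continuous (fun w : 'rV[R]_(k + k) => \sum_(i < k) w 0 (lshift k i)).
  by apply: cont_sum => i; apply: coord_continuous.
have c3 : continuous (fun w : 'rV[R]_(k + k) => \sum_(i < k) w 0 (rshift k i)).
  by apply: cont_sum => i; apply: coord_continuous.
have -> : XR a =
  ((fun w : 'rV[R]_(k + k) => \sum_(i < k) (w 0 (lshift k i) ^+ 2 + w 0 (rshift k i) ^+ 2))
      @^-1` [set r | r <= a ^+ 2])
  `&` (\bigcap_(i in setT) ((fun w : 'rV[R]_(k + k) => w 0 (lshift k i)) @^-1` [set r | 0 <= r]))
  `&` ((fun w : 'rV[R]_(k + k) => \sum_(i < k) w 0 (lshift k i)) @^-1` [set r | r = 1])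
  `&` ((fun w : 'rV[R]_(k + k) => \sum_(i < k) w 0 (rshift k i)) @^-1` [set r | r = 0]).
  apply/seteqP; split => w /=.
    by case=> h1 h2 h3 h4; split => //; split => //; split => // i _; exact: h2.
  by case=> [[[h1 h2] h3] h4]; split => // i; apply: h2.
apply: closedI; [apply: closedI; [apply: closedI|]|].
- by apply: preimage_closed; [move=> w _; apply: c1 | exact: closed_le].
- apply: closed_bigI => i _; apply: preimage_closed; last exact: closed_ge.
  by move=> w _; apply: coord_continuous.
- by apply: preimage_closed; [move=> w _; apply: c2 | exact: closed_eq].
- by apply: preimage_closed; [move=> w _; apply: c3 | exact: closed_eq].
Qed.

Lemma XR_bounded a : 0 <= a -> forall w, XR a w -> forall j, - a <= w 0 j <= a.
Proof.
move=> a0 w [h1 _ _ _] j.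
suff : w 0 j ^+ 2 <= a ^+ 2.
  by move=> h; apply/andP; split; nra.
apply: le_trans h1.
have [i ->|i ->] := split_ordP j.
- rewrite (bigD1 i) //=.
  have : 0 <= \sum_(i0 < k | i0 != i) (w 0 (lshift k i0) ^+ 2 + w 0 (rshift k i0) ^+ 2).
    by apply: sumr_ge0 => l _; rewrite addr_ge0 // sqr_ge0.
  have := sqr_ge0 (w 0 (rshift k i)).
  lra.
- rewrite (bigD1 i) //=.
  have : 0 <= \sum_(i0 < k | i0 != i) (w 0 (lshift k i0) ^+ 2 + w 0 (rshift k i0) ^+ 2).
    by apply: sumr_ge0 => l _; rewrite addr_ge0 // sqr_ge0.
  have := sqr_ge0 (w 0 (lshift k i)).
  lra.
Qed.

Lemma compact_box (a : R) (A : set 'rV[R]_(k + k)) : 0 <= a -> closed A ->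
  (forall v, A v -> forall j, - a <= v 0 j <= a) -> compact A.
Proof.
move=> a0 cA hb; apply: bounded_closed_compact cA.
exists a; split; first by rewrite realE a0.
move=> M aM v Av.
rewrite /= /Num.norm /= mx_normrE.
apply: (big_ind (fun x => x <= M)); first lra.
  by move=> x y hx hy; rewrite ge_max hx hy.
case=> i j _ /=; rewrite (ord1 i).
have := hb _ Av j; rewrite -ler_norml => h; lra.
Qed.

Lemma XR_compact a : 0 <= a -> compact (XR a).
Proof.
move=> a0; exact: (compact_box a0 (@XR_closed a) (XR_bounded a0)).
Qed.

Lemma XR_convex a : convexS (XR a).
Proof.
move=> x y t [hx1 hx2 hx3 hx4] [hy1 hy2 hy3 hy4] t0 t1; split.
- apply: le_trans (_ : (1 - t) * \sum_(i < k) (x 0 (lshift k i) ^+ 2 + x 0 (rshift k i) ^+ 2)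
     + t * \sum_(i < k) (y 0 (lshift k i) ^+ 2 + y 0 (rshift k i) ^+ 2) <= a ^+ 2); last first.
    have : 0 <= 1 - t by lra.
    nra.
  rewrite !mulr_sumr -big_split /=; apply: ler_sum => i _; rewrite !mxE.
  have t1' : 0 <= 1 - t by lra.
  move: (x 0 (lshift k i)) (x 0 (rshift k i)) (y 0 (lshift k i)) (y 0 (rshift k i)) => p1 p2 q1 q2.
  have e : (1 - t) * (p1 ^+ 2 + p2 ^+ 2) + t * (q1 ^+ 2 + q2 ^+ 2)
     - (((1 - t) * p1 + t * q1) ^+ 2 + ((1 - t) * p2 + t * q2) ^+ 2)
     = t * (1 - t) * ((p1 - q1) ^+ 2 + (p2 - q2) ^+ 2) by ring.
  have : 0 <= t * (1 - t) * ((p1 - q1) ^+ 2 + (p2 - q2) ^+ 2).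
    by rewrite !mulr_ge0 // addr_ge0 // sqr_ge0.
  lra.
- move=> i; rewrite !mxE /=; have := hx2 i; have := hy2 i; nra.
- have -> : \sum_(i < k) ((1 - t) *: x + t *: y) 0 (lshift k i) =
     (1 - t) * \sum_(i < k) x 0 (lshift k i) + t * \sum_(i < k) y 0 (lshift k i).
    by rewrite !mulr_sumr -big_split; apply: eq_bigr => i _; rewrite !mxE.
  rewrite hx3 hy3; lra.
- have -> : \sum_(i < k) ((1 - t) *: x + t *: y) 0 (rshift k i) =
     (1 - t) * \sum_(i < k) x 0 (rshift k i) + t * \sum_(i < k) y 0 (rshift k i).
    by rewrite !mulr_sumr -big_split; apply: eq_bigr => i _; rewrite !mxE.
  rewrite hx4 hy4; lra.
Qed.

Lemma XR_nonempty a : (0 < k)%N -> (Num.sqrt k%:R)^-1 <= a -> XR a !=set0.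
Proof.
move=> k0 ha.
have kR : (0 : R) < k%:R by rewrite ltr0n.
pose w0 : 'rV[R]_(k + k) := row_mx (const_mx (k%:R^-1)) 0.
exists w0; rewrite /XR /=.
have el i : w0 0 (lshift k i) = k%:R^-1 by rewrite row_mxEl mxE.
have er i : w0 0 (rshift k i) = 0 by rewrite row_mxEr mxE.
split.
- under eq_bigr do rewrite el er.
  rewrite sumr_const card_ord expr0n /= addr0.
  have s0 : 0 < Num.sqrt (k%:R : R) by rewrite sqrtr_gt0.
  have : (Num.sqrt (k%:R : R))^-1 ^+ 2 <= a ^+ 2.
    have : 0 < (Num.sqrt (k%:R : R))^-1 by rewrite invr_gt0.
    nra.
  rewrite exprVn sqr_sqrtr ?ler0n // => h.
  apply: le_trans h; rewrite -(mulr_natr (k%:R^-1 ^+ 2)).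
  have -> : k%:R^-1 ^+ 2 * k%:R = k%:R^-1 :> R by field; rewrite gt_eqF.
  done.
- by move=> i; rewrite el invr_ge0 ler0n.
- under eq_bigr do rewrite el.
  by rewrite sumr_const card_ord -(mulr_natr (k%:R^-1)) mulVf // gt_eqF.
- under eq_bigr do rewrite er.
  by rewrite big1.
Qed.

End Feas.

Lemma encK (R : realType) k (w : 'rV[R]_(k + k)) : enc (dec w) = w.
Proof.
apply/matrixP => i j; rewrite (ord1 i).
have [l ->|l ->] := split_ordP j.
  by rewrite /enc row_mxEl !mxE.
by rewrite /enc row_mxEr !mxE.
Qed.

Unset Implicit Arguments.
Local Close Scope classical_set_scope.

Theorem theorem3 (R : realType) (n m : nat) (A : 'M[R[i]]_(n, m)) (a1 a2 : R) :
  (0 < n)%N -> (0 < m)%N ->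
  (Num.sqrt (n%:R))^-1 <= a1 -> (Num.sqrt (m%:R))^-1 <= a2 ->
  exists (us : 'cV[R[i]]_n) (vs : 'cV[R[i]]_m) (r : R),
    saddle A a1 a2 us vs r /\
    (forall u' v' r', saddle A a1 a2 u' v' r' -> r' = r) /\
    is_maxmin (feas a1) (feas a2) (payoff A) r /\
    is_minmax (feas a1) (feas a2) (payoff A) r.
Proof.
move=> n0 m0 h1 h2.
have pa1 : 0 <= a1 by apply: le_trans h1; rewrite invr_ge0 sqrtr_ge0.
have pa2 : 0 <= a2 by apply: le_trans h2; rewrite invr_ge0 sqrtr_ge0.
have fX u : feas a1 u -> @XR R n a1 (enc u).
  by rewrite -{1}(decK u) => /(feas_dec _ pa1).
have fX' w : @XR R n a1 w -> feas a1 (dec w).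
  by move=> h; apply/(feas_dec _ pa1).
have fY v : feas a2 v -> @XR R m a2 (enc v).
  by rewrite -{1}(decK v) => /(feas_dec _ pa2).
have fY' w : @XR R m a2 w -> feas a2 (dec w).
  by move=> h; apply/(feas_dec _ pa2).
have pE u v : payoff A u v = payRe A (enc u) (enc v).
  by rewrite -payoff_dec !decK.
have [xs Xxs [ys Yys Hs]] := saddle_exists (XR_nonempty n0 h1) (XR_nonempty m0 h2)
  (XR_compact pa1) (XR_compact pa2) (@XR_convex R n a1) (@XR_convex R m a2)
  (payRe_l A) (payRe_r A).
exists (dec xs), (dec ys), (payRe A xs ys).
have Hsad : saddle A a1 a2 (dec xs) (dec ys) (payRe A xs ys).
  split; first exact: fX'.
  split; first exact: fY'.
  split.
    by move=> v' fv'; rewrite pE encK; apply: Hs => //; apply: fY.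
  by move=> u' fu'; rewrite pE encK; apply: Hs => //; apply: fX.
split => //.
split.
  move=> u' v' r' [fu [fv [H1 H2]]].
  have := H1 (dec ys) (fY' _ Yys); have := H2 (dec xs) (fX' _ Xxs).
  rewrite !pE !encK.
  have := Hs (enc u') ys (fX _ fu) Yys; have := Hs xs (enc v') Xxs (fY _ fv).
  move=> a b c d; apply/eqP; rewrite eq_le; apply/andP; split; lra.
split.
  split.
    move=> u fu.
    have [c Yc Hc] := EVT_minS (XR_nonempty m0 h2) (XR_compact pa2)
      (linR_cont (payRe_r A (enc u))).
    exists (payRe A (enc u) c); split.
      by exists (dec c); [apply: fY' | rewrite pE encK].
    by move=> v fv; rewrite pE; apply: Hc; apply: fY.
  split.
    exists (dec xs); first exact: fX'.
    split; first by exists (dec ys); [apply: fY' | rewrite pE !encK].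
    by move=> v fv; rewrite pE encK; apply: Hs => //; apply: fY.
  move=> u mn fu [_ Hmn].
  have := Hmn (dec ys) (fY' _ Yys); rewrite pE encK.
  have := Hs (enc u) ys (fX _ fu) Yys.
  move=> a b; lra.
split.
  move=> v fv.
  have [c Xc Hc] := EVT_maxS (XR_nonempty n0 h1) (XR_compact pa1)
    (linR_cont (payRe_l A (enc v))).
  exists (payRe A c (enc v)); split.
    by exists (dec c); [apply: fX' | rewrite pE encK].
  by move=> u fu; rewrite pE; apply: Hc; apply: fX.
split.
  exists (dec ys); first exact: fY'.
  split; first by exists (dec xs); [apply: fX' | rewrite pE !encK].
  by move=> u fu; rewrite pE encK; apply: Hs => //; apply: fX.
move=> v mx fv [_ Hmx].
have := Hmx (dec xs) (fX' _ Xxs); rewrite pE encK.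
have := Hs xs (enc v) Xxs (fY _ fv).
move=> a b; lra.
Qed.
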